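(* Let $\ell$ be a nondegenerate Hermitian form on a complex $n$-dimensional space $W$, $A$ an $\ell$-self-adjoint antilinear operator, and $\lambda>0$ such that $\lambda^2$ is an eigenvalue of $A^2$. Let $W_\lambda^{(m)}=\ker(A^2-\lambda^2I)^m$ and let $s_1$ be the least positive integer with $W_\lambda^{(s_1)}=W_\lambda^{(n)}$. Then there exists a vector $v\in W_\lambda^{(n)}$ (which can be taken with $(A-\lambda I)^{s_1}v=0$) such that $$V=\mathrm{span}_{\mathbb C}\{v,(A-\lambda I)v,\dots,(A-\lambda I)^{s_1-1}v\}$$ is an $s_1$-dimensional $A$-invariant subspace on which $\ell$ is nondegenerate.
   Context: An antilinear operator satisfies $A(zv+w)=\bar zAv+Aw$; $\ell$ is linear in the first argument and conjugate-linear in the second; $A$ is $\ell$-self-adjoint if $\ell(Av,w)=\ell(Aw,v)$ for all $v,w$. *)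

(* Defs.v *)
From HB Require Import structures.
From mathcomp Require Import all_boot all_order all_algebra.
Set Implicit Arguments. Unset Strict Implicit. Unset Printing Implicit Defensive.
Import Order.TTheory GRing.Theory Num.Theory.
Local Open Scope ring_scope.

Section Defs.
Variables (C : numClosedFieldType) (n : nat).
Local Notation W := 'rV[C]_n.

Definition antilinear (A : W -> W) : Prop :=
  forall (z : C) (v w : W), A (z *: v + w) = z^* *: A v + A w.

Definition hermitian_form (l : W -> W -> C) : Prop :=
  [/\ forall (z : C) (v w u : W), l (z *: v + w) u = z * l v u + l w u,
      forall (z : C) (u v w : W), l u (z *: v + w) = z^* * l u v + l u w
    & forall v w : W, l w v = (l v w)^*].

Definition nondeg_form (l : W -> W -> C) : Prop :=
  forall v : W, (forall w : W, l v w = 0) -> v = 0.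

Definition l_selfadjoint (l : W -> W -> C) (A : W -> W) : Prop :=
  forall v w : W, l (A v) w = l (A w) v.

Definition gen_eigen (A : W -> W) (lam : C) (m : nat) (x : W) : Prop :=
  iter m (fun y => A (A y) - lam ^+ 2 *: y) x = 0.

(* (A - lambda I) as a (real-linear) map on W *)
Definition AmL (A : W -> W) (lam : C) (y : W) : W := A y - lam *: y.

Definition krylov_span (A : W -> W) (lam : C) (v : W) (s : nat) : {vspace W} :=
  <<[seq iter k (AmL A lam) v | k <- iota 0 s]>>%VS.

Definition A_invariant (A : W -> W) (V : {vspace W}) : Prop :=
  forall x : W, x \in V -> A x \in V.

Definition nondegenerate_on (l : W -> W -> C) (V : {vspace W}) : Prop :=
  forall x : W, x \in V -> (forall y : W, y \in V -> l x y = 0) -> x = 0.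

End Defs.

(* Main.v *)
Require Import Defs.
From HB Require Import structures.
From mathcomp Require Import all_boot all_order all_algebra.
From mathcomp Require Import zify ring.
From Stdlib Require Import Classical.
Import Order.TTheory GRing.Theory Num.Theory.
Local Open Scope ring_scope.
Set Implicit Arguments. Unset Strict Implicit. Unset Printing Implicit Defensive.

Lemma iter0add (V : zmodType) (f : V -> V) :
  (forall x y, f (x + y) = f x + f y) -> forall k, iter k f 0 = 0.
Proof.
move=> fD; have f0 : f 0 = 0.
  by have := fD 0 0; rewrite addr0 => /(congr1 (fun z => z - f 0)); rewrite subrr addrK.
by elim=> //= k ->.
Qed.

Lemma iteradd (V : zmodType) (f : V -> V) :
  (forall x y, f (x + y) = f x + f y) -> forall k x y, iter k f (x + y) = iter k f x + iter k f y.
Proof. by move=> fD; elim=> //= k IH x y; rewrite IH fD. Qed.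

Lemma iteropp (V : zmodType) (f : V -> V) :
  (forall x y, f (x + y) = f x + f y) -> forall k x, iter k f (- x) = - iter k f x.
Proof.
move=> fD k x; apply/eqP; rewrite -subr_eq0 opprK -iteradd // addNr.
by rewrite iter0add.
Qed.

Lemma itercomm (T : Type) (f g : T -> T) :
  (forall x, f (g x) = g (f x)) -> forall k x, iter k f (g x) = g (iter k f x).
Proof. by move=> fg; elim=> //= k IH x; rewrite IH fg. Qed.

Lemma iterscal (C : numClosedFieldType) (V : lmodType C) (f : V -> V) (P : pred C) :
  (forall a x, P a -> f (a *: x) = a *: f x) -> forall a k x, P a -> iter k f (a *: x) = a *: iter k f x.
Proof. by move=> fZ a; elim=> //= k IH x Pa; rewrite IH // fZ. Qed.

Lemma mx_rep (F : fieldType) n (f : 'rV[F]_n -> 'rV[F]_n) :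
  (forall x y, f (x + y) = f x + f y) -> (forall a x, f (a *: x) = a *: f x) ->
  exists Fm : 'M[F]_n, forall k x, x *m Fm ^+ k = iter k f x.
Proof.
move=> fD fZ.
have f0 : f 0 = 0 by have := fZ 0 0; rewrite !scale0r.
exists (\matrix_(i < n) f 'e_i).
have h1 : forall x, x *m (\matrix_(i < n) f 'e_i) = f x.
  move=> x; rewrite mulmx_sum_row {2}(row_sum_delta x).
  elim/big_rec2: _ => [|i y1 y2 _ ->]; first by rewrite f0.
  by rewrite fD fZ rowK.
elim=> [|k IH] x; first by rewrite expr0 mulmx1.
by rewrite exprSr -mulmxE mulmxA IH h1.
Qed.

Lemma rank_pow_le (F : fieldType) n (B : 'M[F]_n) k :
  (B ^+ k.+1 <= B ^+ k)%MS.
Proof. by rewrite exprS -mulmxE submxMl. Qed.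

Lemma pow_stab (F : fieldType) n (B : 'M[F]_n) k :
  (B ^+ k <= B ^+ k.+1)%MS -> forall j, (B ^+ (k + j) <= B ^+ (k + j).+1)%MS.
Proof.
move=> H j.
have := submxMr (B ^+ j) H.
by rewrite !mulmxE -!exprD addSn.
Qed.

Lemma pow_stab_exists (F : fieldType) n (B : 'M[F]_n) :
  exists2 k, (k <= n)%N & (B ^+ k <= B ^+ k.+1)%MS.
Proof.
have H : forall k, (exists2 j, (j < k)%N & (B ^+ j <= B ^+ j.+1)%MS)
                   \/ (\rank (B ^+ k) + k <= n)%N.
  elim=> [|k IH].
    by right; rewrite expr0 -idmxE mxrank1 addn0.
  case: IH => [[j hj hs]|hr].
    by left; exists j => //; apply: ltnW.
  have := mxrank_leqif_sup (rank_pow_le B k).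
  case=> hle heq.
  case hs: (B ^+ k <= B ^+ k.+1)%MS.
    by left; exists k.
  right.
  have: (\rank (B ^+ k.+1) < \rank (B ^+ k))%N.
    by rewrite ltn_neqAle hle andbT heq hs.
  move=> hlt; rewrite addnS; apply: leq_trans hr; by rewrite ltn_add2r.
case: (H n.+1) => [[j hj hs]|hr].
  by exists j.
by exfalso; move: hr; rewrite addnS ltnNge leq_addl.
Qed.

Lemma pow_incl (F : fieldType) n (B : 'M[F]_n) :
  (B ^+ n <= B ^+ (n + n))%MS.
Proof.
case: (pow_stab_exists B) => k hk hs.
have hst := pow_stab hs.
have H : forall d m, (k <= m)%N -> (B ^+ m <= B ^+ (m + d))%MS.
  elim=> [|d IH] m hm; first by rewrite addn0.
  apply: submx_trans (IH m hm) _.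
  rewrite addnS.
  have := hst (m + d - k)%N.
  by rewrite addnBA ?(leq_trans hm (leq_addr _ _)) // addKn.
exact: H.
Qed.

Lemma fitting (F : fieldType) n (B : 'M[F]_n) (w : 'rV[F]_n) :
  exists z : 'rV_n, (w - z *m B ^+ n) *m B ^+ n = 0.
Proof.
have h1 : (w *m B ^+ n <= B ^+ (n + n))%MS.
  exact: submx_trans (submxMl _ _) (pow_incl B).
case/submxP: h1 => D hD.
exists D; rewrite mulmxBl hD exprD -mulmxE mulmxA.
by rewrite subrr.
Qed.

Lemma fitting_fun (F : fieldType) n (f : 'rV[F]_n -> 'rV[F]_n) :
  (forall x y, f (x + y) = f x + f y) -> (forall a x, f (a *: x) = a *: f x) ->
  forall w, exists z, iter n f (w - iter n f z) = 0.
Proof.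
move=> fD fZ w; case: (mx_rep fD fZ) => Fm hF.
case: (fitting Fm w) => z hz; exists z.
by rewrite -!hF.
Qed.

Lemma anti_tri (C : fieldType) m (c : 'I_m -> C) (h : nat -> C) :
  h m.-1 != 0 -> (forall t, (m <= t)%N -> h t = 0) ->
  (forall k : 'I_m, \sum_(j < m) c j * h (j + k)%N = 0) -> forall j, c j = 0.
Proof.
move=> hh hz hs.
suff H : forall t (j : 'I_m), (j < t)%N -> c j = 0.
  by move=> j; apply: (H j.+1).
elim=> // t IH j hj.
have hjm := ltn_ord j.
have hk : (m.-1 - j < m)%N by lia.
have := hs (Ordinal hk); rewrite (bigD1 j) //= big1.
  have -> : (j + (m.-1 - j))%N = m.-1 by lia.
  by rewrite addr0; move/eqP; rewrite mulf_eq0 (negbTE hh) orbF => /eqP.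
move=> i hij; have him := ltn_ord i.
case: (ltngtP i j) => hi.
- by rewrite (IH i) ?mul0r //; lia.
- by rewrite hz ?mulr0 //=; lia.
- by move: hij; rewrite (val_inj hi) eqxx.
Qed.

Unset Implicit Arguments. Set Strict Implicit. Set Printing Implicit Defensive.


Theorem mainTheorem9 (C : numClosedFieldType) (n : nat)
    (l : 'rV[C]_n -> 'rV[C]_n -> C) (A : 'rV[C]_n -> 'rV[C]_n) (lam : C)
    (hl : hermitian_form l) (hnd : nondeg_form l)
    (hA : antilinear A) (hsa : l_selfadjoint l A)
    (hlam : 0 < lam)
    (heig : exists x : 'rV[C]_n, x != 0 /\ A (A x) = lam ^+ 2 *: x)
    (s1 : nat) (hs1pos : (0 < s1)%N)
    (hs1 : forall x, gen_eigen A lam s1 x <-> gen_eigen A lam n x)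
    (hs1min : forall m : nat, (0 < m)%N -> (m < s1)%N ->
       ~ (forall x, gen_eigen A lam m x <-> gen_eigen A lam n x)) :
  exists v : 'rV[C]_n,
    [/\ gen_eigen A lam n v,
        iter s1 (AmL A lam) v = 0,
        \dim (krylov_span A lam v s1) = s1,
        A_invariant A (krylov_span A lam v s1)
      & nondegenerate_on l (krylov_span A lam v s1)].
Proof.
have hlr : lam^* = lam by apply: geC0_conj; apply: ltW.
have hl0 : lam != 0 by rewrite gt_eqF.
have AD : forall x y, A (x + y) = A x + A y.
  by move=> x y; have := hA 1 x y; rewrite scale1r conjC1 scale1r.
have A0 : A 0 = 0 by exact: (iter0add AD 1).
have AZ : forall a x, A (a *: x) = a^* *: A x.
  by move=> a x; have := hA a x 0; rewrite addr0 A0 addr0.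
have AN : forall x, A (- x) = - A x.
  by move=> x; rewrite -scaleN1r AZ conjCN1 scaleN1r.
have AB : forall x y, A (x - y) = A x - A y by move=> x y; rewrite AD AN.
case: hl => hl1 hl2 hl3.
have lD1 : forall x y u, l (x + y) u = l x u + l y u.
  by move=> x y u; have := hl1 1 x y u; rewrite scale1r mul1r.
have l01 : forall u, l 0 u = 0.
  by move=> u; have := lD1 0 0 u; rewrite addr0 => /(congr1 (fun z => z - l 0 u)); rewrite subrr addrK.
have lZ1 : forall a x u, l (a *: x) u = a * l x u.
  by move=> a x u; have := hl1 a x 0 u; rewrite !addr0 l01 addr0.
have lN1 : forall x u, l (- x) u = - l x u.
  by move=> x u; rewrite -scaleN1r lZ1 mulN1r.
have lB1 : forall x y u, l (x - y) u = l x u - l y u.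
  by move=> x y u; rewrite lD1 lN1.
have lD2 : forall u x y, l u (x + y) = l u x + l u y.
  by move=> x y u; have := hl2 1 x y u; rewrite scale1r conjC1 mul1r.
have l02 : forall u, l u 0 = 0.
  by move=> u; have := lD2 u 0 0; rewrite addr0 => /(congr1 (fun z => z - l u 0)); rewrite subrr addrK.
have lZ2 : forall a u x, l u (a *: x) = a^* * l u x.
  by move=> a u x; have := hl2 a u x 0; rewrite !addr0 l02 addr0.
have lN2 : forall x u, l u (- x) = - l u x.
  by move=> x u; rewrite -scaleN1r lZ2 conjCN1 mulN1r.
have lB2 : forall u x y, l u (x - y) = l u x - l u y.
  by move=> u x y; rewrite lD2 lN2.
pose N := AmL A lam.
pose M := fun y => A y + lam *: y.
pose P := fun y => A (A y) - lam ^+ 2 *: y.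
have hgen : forall m x, gen_eigen A lam m x <-> iter m P x = 0 by [].
have NE : forall y, N y = A y - lam *: y by [].
have ND : forall x y, N (x + y) = N x + N y.
  by move=> x y; rewrite !NE AD scalerDr opprD addrACA.
have MD : forall x y, M (x + y) = M x + M y.
  by move=> x y; rewrite /M AD scalerDr addrACA.
have PD : forall x y, P (x + y) = P x + P y.
  by move=> x y; rewrite /P !AD scalerDr opprD addrACA.
have PZ : forall a x, P (a *: x) = a *: P x.
  by move=> a x; rewrite /P !AZ conjCK scalerBr !scalerA mulrC.
have NZ : forall a x, a^* = a -> N (a *: x) = a *: N x.
  by move=> a x ha; rewrite NE AZ ha scalerBr !scalerA mulrC.
have MZ : forall a x, a^* = a -> M (a *: x) = a *: M x.
  by move=> a x ha; rewrite /M AZ ha scalerDr !scalerA mulrC.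
have NZi : forall a x, a^* = - a -> N (a *: x) = - a *: M x.
  by move=> a x ha; rewrite NE /M AZ ha scalerDr !scalerA -scaleNr mulNr (mulrC lam).
have NM : forall y, N (M y) = P y.
  by move=> y; rewrite NE /M /P AD AZ hlr scalerDr !scalerA opprD addrA addrK expr2.
have MN : forall y, M (N y) = P y.
  by move=> y; rewrite NE /M /P AB AZ hlr scalerBr !scalerA addrA subrK expr2.
have NMc : forall y, N (M y) = M (N y) by move=> y; rewrite NM MN.
have N0 : N 0 = 0 by exact: (iter0add ND 1).
have M0 : M 0 = 0 by exact: (iter0add MD 1).
have P0 : P 0 = 0 by exact: (iter0add PD 1).
have iterB : forall (f : 'rV[C]_n -> 'rV[C]_n), (forall x y, f (x + y) = f x + f y) ->
    forall k x y, iter k f (x - y) = iter k f x - iter k f y.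
  by move=> f fD k x y; rewrite iteradd // iteropp.
have NZk : forall a k x, a^* = a -> iter k N (a *: x) = a *: iter k N x.
  move=> a k x ha; apply: (@iterscal C _ N (fun a => a^* == a)); last by rewrite ha.
  by move=> b y /eqP; apply: NZ.
have MZk : forall a k x, a^* = a -> iter k M (a *: x) = a *: iter k M x.
  move=> a k x ha; apply: (@iterscal C _ M (fun a => a^* == a)); last by rewrite ha.
  by move=> b y /eqP; apply: MZ.
have PZk : forall a k x, iter k P (a *: x) = a *: iter k P x.
  by move=> a k x; apply: (@iterscal C _ P predT).
have lP : forall x y, l (P x) y = l x (P y).
  move=> x y; rewrite /P lB1 lB2 lZ1 lZ2 rmorphXn /= hlr.
  have e1 : l (A (A x)) y = l (A y) (A x) := hsa (A x) y.
  have e2 : l x (A (A y)) = l (A y) (A x).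
    by rewrite hl3 hsa [RHS]hl3.
  by rewrite e1 e2.
have lPk : forall k x y, l (iter k P x) y = l x (iter k P y).
  elim=> [|k IH] x y //=.
  by rewrite lP IH -iterSr.
have MNk : forall k z, iter k M (N z) = N (iter k M z).
  by apply: itercomm => z; rewrite NMc.
have NMk : forall k z, iter k N (M z) = M (iter k N z).
  by apply: itercomm => z; rewrite NMc.
have PNM : forall k x, iter k P x = iter k M (iter k N x).
  elim=> [|k IH] x //=.
  by rewrite IH -MN -MNk.
have KL : forall u, iter n P u = 0 -> (forall y, iter n P y = 0 -> l u y = 0) -> u = 0.
  move=> u hu hy; apply: hnd => w.
  case: (fitting_fun PD PZ w) => z hz.
  have -> : w = (w - iter n P z) + iter n P z by rewrite subrK.
  by rewrite lD2 (hy _ hz) add0r -lPk hu l01.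
have hr2 : ((lam *+ 2)^-1)^* = (lam *+ 2)^-1.
  by apply: geC0_conj; rewrite invr_ge0 mulrn_wge0 // ltW.
have h2l : lam *+ 2 != 0 by rewrite mulrn_eq0 negb_or hl0.
have Dec : forall t j k y, (j + k <= t)%N -> iter j N (iter k M y) = 0 ->
    exists a c, [/\ y = a + c, iter j N a = 0 & iter k M c = 0].
  elim=> [|t IH] j k y hjk hy.
    have hj : j = 0%N by lia.
    have hk : k = 0%N by lia.
    by subst; exists 0, 0; rewrite /= addr0.
  case: j hjk hy => [|j] hjk hy.
    by exists 0, y; rewrite add0r iter0add.
  case: k hjk hy => [|k] hjk hy.
    by exists y, 0; rewrite addr0 iter0add.
  have h1 : iter j.+1 N (iter k M (M y)) = 0 by rewrite -iterSr.
  have h2 : iter j N (iter k.+1 M (N y)) = 0 by rewrite MNk -iterSr.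
  have [a1 [c1 [e1 ha1 hc1]]] := IH j.+1 k (M y) ltac:(lia) h1.
  have [a2 [c2 [e2 ha2 hc2]]] := IH j k.+1 (N y) ltac:(lia) h2.
  exists ((lam *+ 2)^-1 *: (a1 - a2)), ((lam *+ 2)^-1 *: (c1 - c2)); split.
  - rewrite -scalerDr.
    have -> : a1 - a2 + (c1 - c2) = M y - N y by rewrite e1 e2 opprD addrACA.
    have -> : M y - N y = (lam *+ 2) *: y.
      by rewrite /M NE opprB addrC addrA subrK -scalerMnl mulr2n.
    by rewrite scalerA mulVf // scale1r.
  - by rewrite NZk // iterB // ha1 /= ha2 N0 subrr scaler0.
  - by rewrite MZk // iterB // hc2 /= hc1 M0 subrr scaler0.
have I1 : forall x y, l (N x) y - l (N y) x = - lam * (l x y - l y x).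
  by move=> x y; rewrite !NE !lB1 !lZ1 (hsa x y); ring.
have I2 : forall x y, (l (N x) y - l y (N x)) + (l x (N y) - l (N y) x)
                      = - (lam *+ 2) * (l x y - l y x).
  move=> x y; rewrite !NE !lB1 !lB2 !lZ1 !lZ2 hlr (hsa x y).
  have -> : l y (A x) = l x (A y) by rewrite hl3 hsa -hl3.
  ring.
have Real : forall t a b x y, (a + b <= t)%N -> iter a N x = 0 -> iter b N y = 0 ->
    l x y = l y x.
  elim=> [|t IH] a b x y hab hx hy.
    have ha : a = 0%N by lia.
    by subst; move: hx => /= ->; rewrite l01 l02.
  case: a hab hx => [|a] hab hx; first by move: hx => /= ->; rewrite l01 l02.
  case: b hab hy => [|b] hab hy; first by move: hy => /= ->; rewrite l01 l02.
  have e1 : l (N x) y = l y (N x).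
    apply: (IH a b.+1); first lia; last exact: hy.
    by rewrite -iterSr.
  have e2 : l x (N y) = l (N y) x.
    apply: (IH a.+1 b); first lia; first exact: hx.
    by rewrite -iterSr.
  have := I2 x y; rewrite e1 e2 !subrr addr0 => /esym/eqP.
  rewrite mulf_eq0 oppr_eq0 (negbTE h2l) /= subr_eq0 => /eqP //.
pose K := fun x => iter s1 N x = 0.
have KN : forall x, K x -> K (N x).
  by move=> x hx; rewrite /K -iterSr /= hx N0.
have KNk : forall j x, K x -> K (iter j N x).
  by elim=> [|j IH] x hx //=; apply: KN; apply: IH.
have Kreal : forall x y, K x -> K y -> l x y = l y x.
  by move=> x y hx hy; apply: (Real (s1 + s1)%N s1 s1).
have Nsym : forall x y, K x -> K y -> l (N x) y = l x (N y).
  move=> x y hx hy; have := I1 x y; rewrite (Kreal x y hx hy) subrr mulr0.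
  by move/eqP; rewrite subr_eq0 => /eqP ->; apply: Kreal => //; apply: KN.
have Nsymk : forall j x y, K x -> K y -> l (iter j N x) y = l x (iter j N y).
  elim=> [|j IH] x y hx hy //=.
  rewrite Nsym; [|exact: KNk|exact: hy].
  by rewrite (IH x (N y) hx (KN y hy)) -iterSr.

have KW : forall x, K x -> iter n P x = 0.
  by move=> x hx; apply/(hs1 x)/hgen; rewrite PNM hx iter0add.
have Nik : forall k x z, z^* = - z -> iter k N (z *: x) = ((-1) ^+ k * z) *: iter k M x.
  elim=> [|k IH] x z hz /=; first by rewrite expr0 mul1r.
  rewrite IH // NZi; last by rewrite rmorphM rmorphXn /= conjCN1 hz mulrN.
  by rewrite exprS mulN1r mulNr.
have NMswap : forall j k y, iter j N (iter k M y) = iter k M (iter j N y).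
  by move=> j k y; apply: itercomm => z; rewrite MNk.
have DecW : forall w, iter n P w = 0 -> exists a b, [/\ w = a + 'i *: b, K a & K b].
  move=> w /hgen /(hs1 w) /hgen; rewrite PNM -NMswap => hw.
  have [a [c [e ha hc]]] := Dec (s1 + s1)%N s1 s1 w (leqnn _) hw.
  exists a, ((- 'i) *: c); split => //.
    by rewrite scalerA mulrN -expr2 sqrCi opprK scale1r.
  by rewrite /K Nik ?hc ?scaler0 // rmorphN /= conjCi.
have [v [hv hvh]] : exists v, K v /\ l (iter s1.-1 N v) v != 0.
  case: (classic (exists v, K v /\ l (iter s1.-1 N v) v != 0)) => // hne.
  exfalso.
  have H0 : forall v, K v -> l (iter s1.-1 N v) v = 0.
    move=> v hv; apply/eqP; apply/negP => hneq; apply: hne; exists v; split => //.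
    by apply/negP.
  have HB : forall x y, K x -> K y -> l (iter s1.-1 N x) y = 0.
    move=> x y hx hy.
    have hxy : K (x + y) by rewrite /K iteradd // hx hy addr0.
    have := H0 _ hxy; rewrite iteradd // !lD1 !lD2 H0 // H0 // add0r addr0.
    rewrite (Nsymk _ y x hy hx) (Kreal y _ hy (KNk _ _ hx)) => /eqP.
    by rewrite -mulr2n mulrn_eq0 /= => /eqP.
  have Hz : forall x, K x -> iter s1.-1 N x = 0.
    move=> x hx; apply: KL; first by apply: KW; apply: KNk.
    move=> w hw; case: (DecW w hw) => a [b [-> ha hb]].
    by rewrite lD2 lZ2 !HB // mulr0 addr0.
  have Hm : forall w, iter n P w = 0 -> iter s1.-1 P w = 0.
    move=> w hw; case: (DecW w hw) => a [b [-> ha hb]].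
    by rewrite iteradd // PZk !PNM !Hz // !iter0add // scaler0 addr0.
  have [hs|hs] : s1 = 1%N \/ (1 < s1)%N by lia.
    case: heig => x0 [hx0 e0].
    have h1 : iter 1 P x0 = 0 by rewrite /= /P e0 subrr.
    have h1s : iter s1 P x0 = 0 by rewrite hs.
    have := Hm x0 (proj1 (hs1 x0) h1s).
    by rewrite hs /= => h0; move: hx0; rewrite h0 eqxx.
  apply: (hs1min s1.-1); [lia | lia |] => x; split.
    move/hgen => hx; apply/(hs1 x)/hgen.
    by rewrite -(prednK hs1pos) /= hx P0.
  by move/hgen => hx; apply/hgen; apply: Hm.
exists v.
rewrite /krylov_span -/N.
set s := [seq iter k N v | k <- iota 0 s1].
have hsz : size s = s1 by rewrite size_map size_iota.
have hnth : forall k, (k < s1)%N -> s`_k = iter k N v.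
  by move=> k hk; rewrite (nth_map 0%N) ?size_iota // nth_iota.
have hmem : forall k, (k < s1)%N -> iter k N v \in <<s>>%VS.
  by move=> k hk; apply: memv_span; apply: map_f; rewrite mem_iota.
pose h := fun t => l (iter t N v) v.
have gram : forall j k, l (iter j N v) (iter k N v) = h (j + k)%N.
  by move=> j k; rewrite -(Nsymk k (iter j N v) v (KNk j v hv) hv) -iterD addnC.
have hhz : forall t, (size s <= t)%N -> h t = 0.
  move=> t; rewrite hsz => ht; rewrite /h -(subnK ht) iterD hv iter0add // l01.
have hh : h (size s).-1 != 0 by rewrite hsz.
have lsum : forall m (c : 'I_m -> C) (X : 'I_m -> 'rV[C]_n) y,
    l (\sum_i c i *: X i) y = \sum_i c i * l (X i) y.
  move=> m c X y; elim/big_rec2: _ => [|i y1 y2 _ <-]; first by rewrite l01.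
  by rewrite lD1 lZ1.
have coef0 : forall (c : 'I_(size s) -> C),
    (forall k, (k < s1)%N -> l (\sum_i c i *: s`_i) (iter k N v) = 0) -> forall i, c i = 0.
  move=> c hc; apply: (anti_tri hh hhz) => kk.
  have hkk : (kk < s1)%N by rewrite -hsz.
  rewrite -[RHS](hc kk hkk) lsum; apply: eq_bigr => j _.
  by rewrite hnth -?hsz // gram.
split => //.
- by apply/hgen; apply: KW.
- have hfree : free (in_tuple s).
    apply/freeP => c hc; apply: coef0 => k hk.
    by rewrite hc l01.
  by move/eqP: hfree => /= ->.
- move=> x hx; rewrite (coord_span (hx : x \in <<in_tuple s>>%VS)).
  elim/big_rec: _ => [|i y _ hy]; first by rewrite A0 rpred0.
  rewrite AD AZ rpredD // rpredZ //.
  have hi : (i < s1)%N by rewrite -hsz.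
  rewrite /= hnth // -[A _](subrK (lam *: iter i N v)) -NE rpredD ?rpredZ ?hmem //.
  have [hi1|hi1] : (i.+1 < s1)%N \/ i.+1 = s1 by lia.
    exact: (hmem i.+1 hi1).
  by rewrite -/(iter i.+1 N v) hi1 hv rpred0.
- move=> x hx hxy.
  have ex := coord_span (hx : x \in <<in_tuple s>>%VS).
  have hc : forall i, coord (in_tuple s) i x = 0.
    apply: coef0 => k hk; rewrite -ex; exact: hxy _ (hmem k hk).
  by rewrite ex big1 // => i _; rewrite hc scale0r.
Qed.
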